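(* Let $\mathcal{A}=\{f\in C^\infty(]0,1[,]0,1[)\mid \lim_{x\to1}f(x)=1,\ \lim_{x\to0}f(x)=0\}$ and $\mathcal{D}=\{f\in\mathcal{A}\mid \inf_{x\in]0,1[}f'(x)>0 \text{ and } \sup_{x\in]0,1[}f'(x)>0\}$. Let $P\in\mathbb{R}[x]$ be a polynomial with $P(0)=P(1)=0$, $0<P(x)<\min(x,1-x)$ for all $x\in]0,1[$, and $\sup_{x\in]0,1[}|P'(x)|<1$. Define $\varphi(t,x)=\frac{P(x)t}{(1-P(x))t+P(x)}$ and $c_t(x)=x+\varphi(t,x)$ for $t\ge0$, $c_t(x)=x-\varphi(-t,x)$ for $t<0$. Then $c_t\in\mathcal{D}$ for all $t\in[0,1]$. *)

(* Defs.v *)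
From Stdlib Require Import Reals List.
From Coquelicot Require Import Coquelicot.
Open Scope R_scope.

(* Polynomial with coefficient list [a0; a1; ...; an] (constant term first). *)
Definition poly_eval (l : list R) (x : R) : R :=
  fold_right (fun a acc => a + x * acc) 0 l.

Definition in_open01 (x : R) : Prop := 0 < x < 1.

Definition smooth_on01 (f : R -> R) : Prop :=
  forall n x, in_open01 x -> ex_derive_n f n x.

(* The class A: smooth maps ]0,1[ -> ]0,1[ with lim_{x->1} f = 1, lim_{x->0} f = 0.
   (f is a total function on R; only its values on ]0,1[ matter.) *)
Definition classA (f : R -> R) : Prop :=
  smooth_on01 f /\
  (forall x, in_open01 x -> 0 < f x < 1) /\
  filterlim f (at_left 1) (locally 1) /\
  filterlim f (at_right 0) (locally 0).

Definition inf01 (g : R -> R) : Rbar :=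
  Glb_Rbar (fun y => exists x, in_open01 x /\ y = g x).
Definition sup01 (g : R -> R) : Rbar :=
  Lub_Rbar (fun y => exists x, in_open01 x /\ y = g x).

Definition classD (f : R -> R) : Prop :=
  classA f /\
  Rbar_lt (Finite 0) (inf01 (Derive f)) /\
  Rbar_lt (Finite 0) (sup01 (Derive f)).

Definition phi (P : R -> R) (t x : R) : R :=
  P x * t / ((1 - P x) * t + P x).

Definition ct (P : R -> R) (t : R) (x : R) : R :=
  if Rle_dec 0 t then x + phi P t x else x - phi P (- t) x.

(* Main.v *)
Require Import Defs.
From Stdlib Require Import Reals List Lra.
From Coquelicot Require Import Coquelicot.
Open Scope R_scope.

Lemma loc01 x : in_open01 x -> locally x in_open01.
Proof.
  intros [H0 H1].
  assert (He : 0 < Rmin x (1 - x)) by (apply Rmin_pos; lra).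
  exists (mkposreal _ He). intros y Hy.
  change (Rabs (y - x) < Rmin x (1 - x)) in Hy.
  apply Rabs_lt_between in Hy.
  pose proof (Rmin_l x (1-x)); pose proof (Rmin_r x (1-x)).
  unfold in_open01; lra.
Qed.

Fixpoint Cn (n : nat) (f : R -> R) : Prop :=
  match n with
  | O => True
  | S m => (forall x, in_open01 x -> ex_derive f x) /\ Cn m (Derive f)
  end.

Lemma Cn_ext n : forall f g, (forall x, in_open01 x -> f x = g x) -> Cn n f -> Cn n g.
Proof.
  induction n as [|n IH]; simpl; auto.
  intros f g E [H1 H2]; split.
  - intros x Hx. apply ex_derive_ext_loc with f; [|auto].
    apply filter_imp with in_open01; [auto | apply loc01; auto].
  - apply IH with (Derive f); auto.
    intros x Hx. apply Derive_ext_loc.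
    apply filter_imp with in_open01; [auto | apply loc01; auto].
Qed.

Lemma Cn_down n : forall f, Cn (S n) f -> Cn n f.
Proof.
  induction n as [|n IH]; simpl; auto.
  intros f [H1 H2]; split; auto.
Qed.

Lemma Cn_const n : forall a, Cn n (fun _ => a).
Proof.
  induction n as [|n IH]; simpl; auto.
  intros a; split.
  - intros; apply ex_derive_const.
  - apply Cn_ext with (fun _ => 0); auto.
    intros; rewrite Derive_const; auto.
Qed.

Lemma Cn_id n : Cn n (fun x => x).
Proof.
  destruct n; simpl; auto. split.
  - intros; apply ex_derive_id.
  - apply Cn_ext with (fun _ => 1). intros; apply sym_eq, Derive_id. apply Cn_const.
Qed.

Lemma Cn_plus n : forall f g, Cn n f -> Cn n g -> Cn n (fun x => f x + g x).
Proof.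
  induction n as [|n IH]; simpl; auto.
  intros f g [F1 F2] [G1 G2]; split.
  - intros; apply (ex_derive_plus f g); auto.
  - apply Cn_ext with (fun x => Derive f x + Derive g x).
    + intros; rewrite Derive_plus; auto.
    + apply IH; auto.
Qed.

Lemma Cn_mult n : forall f g, Cn n f -> Cn n g -> Cn n (fun x => f x * g x).
Proof.
  induction n as [|n IH]; auto.
  intros f g HF HG.
  pose proof (Cn_down _ _ HF) as HF'. pose proof (Cn_down _ _ HG) as HG'.
  destruct HF as [F1 F2]; destruct HG as [G1 G2]; split.
  - intros; apply ex_derive_mult; auto.
  - apply Cn_ext with (fun x => Derive f x * g x + f x * Derive g x).
    + intros; rewrite Derive_mult; auto.
    + apply Cn_plus; apply IH; auto.
Qed.

Lemma Cn_inv n : forall f, Cn n f -> (forall x, in_open01 x -> f x <> 0) ->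
  Cn n (fun x => / f x).
Proof.
  induction n as [|n IH]; auto.
  intros f HF Hnz.
  pose proof (Cn_down _ _ HF) as HF'.
  destruct HF as [F1 F2]; split.
  - intros; apply ex_derive_inv; auto.
  - apply Cn_ext with (fun x => (-1) * Derive f x * ((/ f x) * (/ f x))).
    + intros x Hx; rewrite Derive_inv; auto. specialize (Hnz x Hx). field; auto.
    + apply Cn_mult; [apply Cn_mult; [apply Cn_const|auto]|].
      apply Cn_mult; apply IH; auto.
Qed.

Lemma Derive_n_Derive n : forall f x, Derive_n (Derive f) n x = Derive_n f (S n) x.
Proof.
  induction n as [|n IH]; intros f x; simpl; auto.
  apply Derive_ext. intros; apply IH.
Qed.

Lemma Cn_ex n : forall f x, Cn n f -> in_open01 x -> ex_derive_n f n x.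
Proof.
  induction n as [|n IH]; simpl; auto.
  intros f x [H1 H2] Hx. destruct n as [|n].
  - simpl. auto.
  - specialize (IH _ _ H2 Hx). simpl in IH |- *.
    apply ex_derive_ext with (Derive_n (Derive f) n); auto.
    intros; apply Derive_n_Derive.
Qed.

Lemma Cn_poly n l : Cn n (poly_eval l).
Proof.
  induction l as [|a l IH].
  - apply (Cn_const n 0).
  - apply (Cn_plus n (fun _ => a) (fun x => x * poly_eval l x)); [apply Cn_const|]. apply Cn_mult; [apply Cn_id|auto].
Qed.

Lemma poly_ex_derive l x : ex_derive (poly_eval l) x.
Proof.
  induction l as [|a l IH]; simpl.
  - apply ex_derive_const.
  - apply (ex_derive_plus (fun _ => a) (fun x => x * poly_eval l x)); [apply ex_derive_const|]. apply ex_derive_mult; auto. apply ex_derive_id.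
Qed.

Lemma Derive_ct (P : R -> R) t x : 0 <= t -> (forall y, ex_derive P y) ->
  (1 - P x)*t + P x <> 0 ->
  Derive (ct P t) x = 1 + Derive P x * t^2 / ((1 - P x)*t + P x)^2.
Proof.
  intros Ht HP HD.
  rewrite (Derive_ext (ct P t) (fun x => x + P x * t / ((1 - P x)*t + P x))).
  2:{ intros y; unfold ct, phi; destruct (Rle_dec 0 t); [reflexivity|lra]. }
  apply is_derive_unique. auto_derive.
  - repeat split; auto.
  - replace (Derive (fun x0 : R => P x0) x) with (Derive P x) by reflexivity.
    field. auto.
Qed.

Theorem lemma8p3 (l : list R) :
  poly_eval l 0 = 0 ->
  poly_eval l 1 = 0 ->
  (forall x, 0 < x < 1 -> 0 < poly_eval l x < Rmin x (1 - x)) ->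
  Rbar_lt (sup01 (fun x => Rabs (Derive (poly_eval l) x))) (Finite 1) ->
  forall t, 0 <= t <= 1 -> classD (ct (poly_eval l) t).
Proof.
  intros H0 H1 Hpos Hsup t Ht.
  set (P := poly_eval l) in *.
  assert (HPd : forall y, ex_derive P y) by (intros; apply poly_ex_derive).
  assert (HPb : forall x, in_open01 x -> 0 < P x /\ P x < x /\ P x < 1 - x).
  { intros x Hx. destruct (Hpos x Hx) as [A B].
    pose proof (Rmin_l x (1-x)); pose proof (Rmin_r x (1-x)). lra. }
  assert (HD : forall x, in_open01 x -> t <= (1 - P x)*t + P x /\ 0 < (1 - P x)*t + P x).
  { intros x Hx. destruct (HPb x Hx) as [A [B C]]. destruct Hx. split; nra. }
  assert (Hct : forall x, ct P t x = x + P x * t / ((1 - P x)*t + P x)).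
  { intros y; unfold ct, phi; destruct (Rle_dec 0 t); [reflexivity|lra]. }
  assert (Hphi : forall x, in_open01 x -> 0 <= P x * t / ((1 - P x)*t + P x) <= P x).
  { intros x Hx. destruct (HD x Hx) as [D1 D2]. destruct (HPb x Hx) as [A _].
    assert (Q : t / ((1 - P x)*t + P x) <= 1).
    { apply Rmult_le_reg_r with ((1 - P x)*t + P x); auto.
      unfold Rdiv; rewrite Rmult_assoc, Rinv_l; lra. }
    assert (Q2 : 0 <= t / ((1 - P x)*t + P x)).
    { unfold Rdiv; apply Rmult_le_pos; [lra|]. apply Rlt_le, Rinv_0_lt_compat; auto. }
    replace (P x * t / ((1 - P x)*t + P x)) with (P x * (t / ((1 - P x)*t + P x)))
      by (unfold Rdiv; ring).
    split; nra. }
  assert (Hval : forall x, in_open01 x -> x <= ct P t x < 1 /\ ct P t x < 2 * x).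
  { intros x Hx. rewrite Hct. destruct (Hphi x Hx). destruct (HPb x Hx) as [A [B C]].
    lra. }
  assert (Hs : exists s, s < 1 /\ forall x, in_open01 x -> Rabs (Derive P x) <= s).
  { pose proof (Lub_Rbar_correct (fun y => exists x, in_open01 x /\ y = Rabs (Derive P x))) as [U _].
    unfold sup01 in Hsup. fold P in Hsup.
    destruct (Lub_Rbar _) as [s| |] eqn:E.
    - exists s; split; [exact Hsup|]. intros x Hx.
      specialize (U (Rabs (Derive P x)) (ex_intro _ x (conj Hx eq_refl))). exact U.
    - destruct Hsup.
    - specialize (U (Rabs (Derive P (/2)))). destruct U. exists (/2). split; [split; lra|reflexivity]. }
  destruct Hs as [s [Hs1 Hs2]].
  assert (Hder : forall x, in_open01 x -> 1 - s <= Derive (ct P t) x).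
  { intros x Hx. destruct (HD x Hx) as [D1 D2].
    rewrite Derive_ct; [| lra | auto | lra].
    set (D := (1 - P x)*t + P x) in *.
    assert (Q : t^2 / D^2 <= 1).
    { apply Rmult_le_reg_r with (D^2); [nra|].
      unfold Rdiv; rewrite Rmult_assoc, Rinv_l; nra. }
    assert (Q2 : 0 <= t^2 / D^2).
    { unfold Rdiv; apply Rmult_le_pos; [nra|]. apply Rlt_le, Rinv_0_lt_compat; nra. }
    specialize (Hs2 x Hx).
    replace (Derive P x * t ^ 2 / D ^ 2) with (Derive P x * (t ^ 2 / D ^ 2)) by (unfold Rdiv; ring).
    pose proof (Rabs_le_between' (Derive P x) 0 s) as [Z _].
    replace (Derive P x - 0) with (Derive P x) in Z by ring.
    pose proof (Rle_abs (Derive P x)). pose proof (Rabs_pos (Derive P x)).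
    assert (-s <= Derive P x) by (pose proof (Rabs_Ropp (Derive P x)); pose proof (Rle_abs (- Derive P x)); lra).
    nra. }
  split; [split; [|split; [|split]] | split].
  - intros n x Hx. apply Cn_ex; auto.
    apply Cn_ext with (fun x => x + (P x * t) * / ((1 - P x)*t + P x)).
    + intros y _. rewrite Hct. reflexivity.
    + apply Cn_plus; [apply Cn_id|]. apply Cn_mult.
      * apply Cn_mult; [apply Cn_poly|apply Cn_const].
      * apply Cn_inv.
        -- apply (Cn_plus n (fun x => (1 - P x) * t) P); [|apply Cn_poly].
           apply (Cn_mult n (fun x => 1 - P x) (fun _ => t)); [|apply Cn_const].
           apply (Cn_plus n (fun _ => 1) (fun x => - P x)); [apply Cn_const|].
           apply Cn_ext with (fun x => (-1) * P x); [intros; ring|].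
           apply (Cn_mult n (fun _ => -1) P); [apply Cn_const|apply Cn_poly].
        -- intros y Hy. destruct (HD y Hy). lra.
  - intros x Hx. destruct (Hval x Hx). destruct Hx. lra.
  - apply filterlim_locally. intros eps.
    assert (He : 0 < Rmin eps 1) by (apply Rmin_pos; [apply cond_pos|lra]).
    exists (mkposreal _ He). intros y Hy Hy1. simpl in Hy.
    change (Rabs (y - 1) < Rmin eps 1) in Hy.
    apply Rabs_lt_between in Hy.
    pose proof (Rmin_l eps 1); pose proof (Rmin_r eps 1).
    change (Rabs (ct P t y - 1) < eps).
    assert (Hy' : in_open01 y) by (split; lra).
    destruct (Hval y Hy'). rewrite Rabs_left1; lra.
  - apply filterlim_locally. intros eps.
    assert (He : 0 < Rmin (eps/2) (1/2)) by (apply Rmin_pos; [pose proof (cond_pos eps)|]; lra).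
    exists (mkposreal _ He). intros y Hy Hy1. simpl in Hy.
    change (Rabs (y - 0) < Rmin (eps/2) (1/2)) in Hy.
    apply Rabs_lt_between in Hy.
    pose proof (Rmin_l (eps/2) (1/2)); pose proof (Rmin_r (eps/2) (1/2)).
    change (Rabs (ct P t y - 0) < eps).
    assert (Hy' : in_open01 y) by (split; lra).
    destruct (Hval y Hy'). rewrite Rabs_right; lra.
  - unfold inf01.
    destruct (Glb_Rbar_correct (fun y => exists x, in_open01 x /\ y = Derive (ct P t) x)) as [_ G].
    apply Rbar_lt_le_trans with (Finite (1 - s)); [simpl; lra|].
    apply G. intros y [x [Hx ->]]. simpl. apply Hder; auto.
  - unfold sup01.
    destruct (Lub_Rbar_correct (fun y => exists x, in_open01 x /\ y = Derive (ct P t) x)) as [G _].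
    apply Rbar_lt_le_trans with (Finite (Derive (ct P t) (/2))).
    + simpl. assert (in_open01 (/2)) by (split; lra). pose proof (Hder _ H). lra.
    + apply G. exists (/2). split; [split; lra|reflexivity].
Qed.
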